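(* Let $\mathsf{X}$ be a finite set of propositional variables. A state property $\mathcal{P}$ over $\mathsf{X}$ is of the form $\|\phi\|_{\mathsf{X}}$ for some formula $\phi$ of $\mathsf{BSML}^{\sqcup}$ with propositional variables in $\mathsf{X}$ if and only if $\mathcal{P}$ is invariant under $k$-bisimulation for some $k\in\mathbb{N}$.
   Context: Formulas of $\mathsf{BSML}^{\sqcup}$: $\phi ::= p \mid \neg\phi \mid (\phi\wedge\phi) \mid (\phi\vee\phi) \mid \Diamond\phi \mid \mathrm{NE}\mid \phi\sqcup\phi$. A model over $\mathsf{X}$ is $M=(W,R,V)$ with $W\ne\emptyset$, $R\subseteq W\times W$, $V:\mathsf{X}\to\wp(W)$; a state is $s\subseteq W$; $R[w]=\{v:wRv\}$. Support/anti-support: $s\models p$ iff $s\subseteq V(p)$; $s\dashv p$ iff $s\cap V(p)=\emptyset$; $s\models\mathrm{NE}$ iff $s\ne\emptyset$; $s\dashv\mathrm{NE}$ iff $s=\emptyset$; $s\models\neg\phi$ iff $s\dashv\phi$; $s\dashv\neg\phi$ iff $s\models\phi$; $s\models\phi\wedge\psi$ iff both; $s\dashv\phi\wedge\psi$ iff $s=t\cup u$ with $t\dashv\phi$, $u\dashv\psi$; $s\models\phi\vee\psi$ iff $s=t\cup u$ with $t\models\phi$, $u\models\psi$; $s\dashv\phi\vee\psi$ iff $s\dashv\phi$ and $s\dashv\psi$; $s\models\phi\sqcup\psi$ iff $s\models\phi$ or $s\models\psi$; $s\dashv\phi\sqcup\psi$ iff $s\dashv\phi$ and $s\dashv\psi$;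 $s\models\Diamond\phi$ iff each $w\in s$ has a nonempty $t\subseteq R[w]$ with $t\models\phi$; $s\dashv\Diamond\phi$ iff $R[w]\dashv\phi$ for all $w\in s$. A pointed state model over $\mathsf{X}$ is $(M,s)$ with $s$ a state on $M$; a state property over $\mathsf{X}$ is a class of pointed state models over $\mathsf{X}$; $\|\phi\|_{\mathsf{X}}:=\{(M,s): M,s\models\phi\}$. World $k$-bisimilarity: $w\rightleftharpoons_0 w'$ iff they agree on all $p\in\mathsf{X}$; $w\rightleftharpoons_{k+1} w'$ iff $w\rightleftharpoons_0 w'$, each $v\in R[w]$ has $v'\in R'[w']$ with $v\rightleftharpoons_k v'$ and each $v'\in R'[w']$ has $v\in R[w]$ with $v\rightleftharpoons_k v'$. State $k$-bisimilarity $M,s\rightleftharpoons_k M',s'$: each $w\in s$ is $k$-bisimilar to some $w'\in s'$ and vice versa. $\mathcal{P}$ is invariant under $k$-bisimulation if $(M,s)\in\mathcal{P}$ and $M,s\rightleftharpoons_k M',s'$ imply $(M',s')\in\mathcal{P}$. *)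

(* Defs.v *)
From Stdlib Require Import List.



Inductive form (X : Type) : Type :=
| Var : X -> form X
| Neg : form X -> form X
| And : form X -> form X -> form X
| Or  : form X -> form X -> form X
| Dia : form X -> form X
| NE  : form X
| GOr : form X -> form X -> form X.
Arguments Var {X}. Arguments Neg {X}. Arguments And {X}. Arguments Or {X}. Arguments Dia {X}. Arguments NE {X}. Arguments GOr {X}.

(* A model over X: nonempty carrier (witness w0), accessibility R, valuation V. *)
Record model (X : Type) : Type := Model {
  W  : Type;
  w0 : W;
  R  : W -> W -> Prop;
  V  : X -> W -> Prop }.
Arguments W {X}. Arguments R {X}. Arguments V {X}.

Definition state {X} (M : model X) := W M -> Prop.

Definition is_union {A : Type} (s t u : A -> Prop) : Prop :=
  forall w, s w <-> (t w \/ u w).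

(* sem phi = (support, anti-support) *)
Fixpoint sem {X} (M : model X) (phi : form X) : (state M -> Prop) * (state M -> Prop) :=
  match phi with
  | Var p => (fun s => forall w, s w -> V M p w,
              fun s => forall w, s w -> ~ V M p w)
  | NE => (fun s => exists w, s w, fun s => forall w, ~ s w)
  | Neg a => (snd (sem M a), fst (sem M a))
  | And a b => (fun s => fst (sem M a) s /\ fst (sem M b) s,
                fun s => exists t u, is_union s t u /\ snd (sem M a) t /\ snd (sem M b) u)
  | Or a b => (fun s => exists t u, is_union s t u /\ fst (sem M a) t /\ fst (sem M b) u,
               fun s => snd (sem M a) s /\ snd (sem M b) s)
  | GOr a b => (fun s => fst (sem M a) s \/ fst (sem M b) s,
                fun s => snd (sem M a) s /\ snd (sem M b) s)
  | Dia a => (fun s => forall w, s w ->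
                 exists t : state M, (forall v, t v -> R M w v) /\ (exists v, t v) /\ fst (sem M a) t,
              fun s => forall w, s w -> snd (sem M a) (R M w))
  end.

Definition supports {X : Type} (M : model X) (s : state M) (phi : form X) : Prop := fst (sem M phi) s.

Definition state_property (X : Type) := forall M : model X, state M -> Prop.

Definition extension {X} (phi : form X) : state_property X := fun M s => supports M s phi.

Fixpoint wbisim {X} (k : nat) (M M' : model X) (w : W M) (w' : W M') : Prop :=
  (forall p : X, V M p w <-> V M' p w') /\
  match k with
  | 0 => True
  | S k' => (forall v, R M w v -> exists v', R M' w' v' /\ wbisim k' M M' v v') /\
            (forall v', R M' w' v' -> exists v, R M w v /\ wbisim k' M M' v v')
  end.

Definition sbisim {X} (k : nat) (M : model X) (s : state M) (M' : model X) (s' : state M') : Prop :=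
  (forall w, s w -> exists w', s' w' /\ wbisim k M M' w w') /\
  (forall w', s' w' -> exists w, s w /\ wbisim k M M' w w').

Definition invariant_k {X} (k : nat) (P : state_property X) : Prop :=
  forall (M : model X) (s : state M) (M' : model X) (s' : state M'),
    P M s -> sbisim k M s M' s' -> P M' s'.

Definition finite_type (X : Type) : Prop := exists l : list X, forall x : X, In x l.

(* Main.v *)
Require Import Defs.
From Stdlib Require Import List Classical Lia.
Import ListNotations.

Definition Top {X} : form X := Or (Dia NE) (Neg (Dia NE)).
Definition Box {X} (a : form X) : form X := Neg (Dia (Neg a)).
Definition bigand {X} (l : list (form X)) := fold_right And Top l.
Definition bigor {X} (l : list (form X)) := fold_right Or (Neg Top) l.

Fixpoint tr {X} (M : model X) (w : W M) (phi : form X) : Prop :=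
  match phi with
  | Var p => V M p w
  | NE => True
  | Neg a => ~ tr M w a
  | And a b => tr M w a /\ tr M w b
  | Or a b => tr M w a \/ tr M w b
  | GOr a b => tr M w a \/ tr M w b
  | Dia a => exists v, R M w v /\ tr M v a
  end.

Fixpoint cl {X} (phi : form X) : Prop :=
  match phi with
  | Var _ => True | NE => False | Neg a => cl a
  | And a b => cl a /\ cl b | Or a b => cl a /\ cl b
  | GOr _ _ => False | Dia a => cl a \/ a = NE end.

Lemma flat {X} (phi : form X) : cl phi -> forall M (s : state M),
  (fst (sem M phi) s <-> forall w, s w -> tr M w phi) /\
  (snd (sem M phi) s <-> forall w, s w -> ~ tr M w phi).
Proof.
  induction phi as [p|a IHa|a IHa b IHb|a IHa b IHb|a IHa| |a IHa b IHb];
    simpl; intros Hc M s.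
  - split; split; auto.
  - destruct (IHa Hc M s) as [H1 H2]. split.
    + exact H2.
    + rewrite H1. split; intros H w Hw.
      * intro Hn; apply Hn; auto.
      * apply NNPP; auto.
  - destruct Hc as [Ha Hb]. split.
    + rewrite (proj1 (IHa Ha M s)), (proj1 (IHb Hb M s)).
      split. intros [H1 H2] w Hw; auto. intros H; split; intros w Hw; apply H; auto.
    + split.
      * intros (t & u & Hun & Ht & Hu) w Hw [Ta Tb].
        destruct (proj1 (Hun w) Hw) as [Hw'|Hw'].
        -- exact (proj1 (proj2 (IHa Ha M t)) Ht w Hw' Ta).
        -- exact (proj1 (proj2 (IHb Hb M u)) Hu w Hw' Tb).
      * intros H. exists (fun w => s w /\ ~ tr M w a), (fun w => s w /\ ~ tr M w b).
        split; [|split].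
        -- intro w; split.
           ++ intro Hw. destruct (classic (tr M w a)) as [T|T].
              ** right; split; auto. intro T2; apply (H w Hw); auto.
              ** left; auto.
           ++ intros [[? _]|[? _]]; auto.
        -- apply (proj2 (proj2 (IHa Ha M _))). intros w [_ ?]; auto.
        -- apply (proj2 (proj2 (IHb Hb M _))). intros w [_ ?]; auto.
  - destruct Hc as [Ha Hb]. split.
    + split.
      * intros (t & u & Hun & Ht & Hu) w Hw.
        destruct (proj1 (Hun w) Hw) as [Hw'|Hw'].
        -- left; exact (proj1 (proj1 (IHa Ha M t)) Ht w Hw').
        -- right; exact (proj1 (proj1 (IHb Hb M u)) Hu w Hw').
      * intros H. exists (fun w => s w /\ tr M w a), (fun w => s w /\ tr M w b).
        split; [|split].
        -- intro w; split.
           ++ intro Hw. destruct (H w Hw); auto.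
           ++ intros [[? _]|[? _]]; auto.
        -- apply (proj2 (proj1 (IHa Ha M _))). intros w [_ ?]; auto.
        -- apply (proj2 (proj1 (IHb Hb M _))). intros w [_ ?]; auto.
    + rewrite (proj2 (IHa Ha M s)), (proj2 (IHb Hb M s)).
      split. intros [H1 H2] w Hw [?|?]; [apply (H1 w Hw)|apply (H2 w Hw)]; auto.
      intros H; split; intros w Hw ?; apply (H w Hw); auto.
  - destruct Hc as [Hc| ->].
    + split; split.
      * intros H w Hw. destruct (H w Hw) as (t & Ht & [v Hv] & Hs).
        exists v; split; auto. exact (proj1 (proj1 (IHa Hc M t)) Hs v Hv).
      * intros H w Hw. destruct (H w Hw) as [v [Hr Ht]].
        exists (fun x => x = v). split; [intros x ->; auto|split; [exists v; auto|]].
        apply (proj2 (proj1 (IHa Hc M _))). intros x ->; auto.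
      * intros H w Hw [v [Hr Ht]].
        exact (proj1 (proj2 (IHa Hc M (R M w))) (H w Hw) v Hr Ht).
      * intros H w Hw. apply (proj2 (proj2 (IHa Hc M (R M w)))).
        intros v Hr Ht. apply (H w Hw). eauto.
    + simpl. split; split.
      * intros H w Hw. destruct (H w Hw) as (t & Ht & [v Hv] & _). eauto.
      * intros H w Hw. destruct (H w Hw) as [v [Hr _]].
        exists (fun x => x = v). split; [intros x ->; auto|split; exists v; auto].
      * intros H w Hw [v [Hr _]]. exact (H w Hw v Hr).
      * intros H w Hw v Hr. apply (H w Hw). eauto.
  - contradiction.
  - contradiction.
Qed.

Lemma cl_Top {X} : cl (@Top X).
Proof. simpl; auto. Qed.

Lemma tr_Top {X} (M : model X) w : tr M w Top.
Proof. simpl. apply classic. Qed.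

Lemma cl_bigand {X} (l : list (form X)) : (forall c, In c l -> cl c) -> cl (bigand l).
Proof. induction l; simpl; intros H. apply cl_Top. split; auto. Qed.

Lemma cl_bigor {X} (l : list (form X)) : (forall c, In c l -> cl c) -> cl (bigor l).
Proof. induction l; simpl; intros H. apply cl_Top. split; auto. Qed.

Lemma tr_bigand {X} (M : model X) w (l : list (form X)) :
  tr M w (bigand l) <-> forall c, In c l -> tr M w c.
Proof.
  induction l; simpl.
  - split; [intros _ c []|intros _; apply tr_Top].
  - rewrite IHl. split.
    + intros [H1 H2] c [<-|Hc]; auto.
    + intros H; split; auto.
Qed.

Lemma tr_bigor {X} (M : model X) w (l : list (form X)) :
  tr M w (bigor l) <-> exists c, In c l /\ tr M w c.
Proof.
  induction l; simpl.
  - split; [intros H; exfalso; apply H, tr_Top|intros [c [[] _]]].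
  - rewrite IHl. split.
    + intros [H|[c [Hc H]]]; eauto.
    + intros [c [[<-|Hc] H]]; eauto.
Qed.

Lemma tr_Box {X} (M : model X) w (a : form X) :
  tr M w (Box a) <-> forall v, R M w v -> tr M v a.
Proof.
  simpl. split.
  - intros H v Hr. apply NNPP. intro Hn. apply H. eauto.
  - intros H [v [Hr Hn]]. apply Hn, H, Hr.
Qed.

Fixpoint powerlist {A} (l : list A) : list (list A) :=
  match l with
  | [] => [[]]
  | x :: l' => map (cons x) (powerlist l') ++ powerlist l'
  end.

Lemma power_classic {A} (Q : A -> Prop) (l : list A) :
  exists S, In S (powerlist l) /\ forall x, In x S <-> In x l /\ Q x.
Proof.
  induction l as [|a l IH]; simpl.
  - exists []; split; [left; auto|]. intros x; simpl; tauto.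
  - destruct IH as [S [HS HQ]]. destruct (classic (Q a)) as [Qa|Qa].
    + exists (a :: S). split.
      * apply in_or_app; left; apply in_map; auto.
      * intros x; simpl. rewrite HQ. split.
        -- intros [<-|H]; tauto.
        -- intros [[<-|H] Hq]; tauto.
    + exists S. split.
      * apply in_or_app; right; auto.
      * intros x. rewrite HQ. split.
        -- intros [H1 H2]; split; auto.
        -- intros [[<-|H] Hq]; tauto.
Qed.

Lemma power_incl {A} (l : list A) S : In S (powerlist l) -> forall x, In x S -> In x l.
Proof.
  revert S; induction l as [|a l IH]; simpl; intros S HS x Hx.
  - destruct HS as [<-|[]]; destruct Hx.
  - apply in_app_or in HS. destruct HS as [HS|HS].
    + apply in_map_iff in HS. destruct HS as [S' [<- HS']].
      destruct Hx as [<-|Hx]; [left; auto|right; eapply IH; eauto].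
    + right; eapply IH; eauto.
Qed.

Fixpoint lits {X} (l : list X) : list (form X) :=
  match l with
  | [] => [Top]
  | p :: l' => flat_map (fun c => [And (Var p) c; And (Neg (Var p)) c]) (lits l')
  end.

Lemma lits_cl {X} (l : list X) c : In c (lits l) -> cl c.
Proof.
  revert c; induction l as [|a l IH]; simpl; intros c Hc.
  - destruct Hc as [<-|[]]. apply cl_Top.
  - apply in_flat_map in Hc. destruct Hc as [c' [Hc' Hin]].
    destruct Hin as [<-|[<-|[]]]; simpl; auto.
Qed.

Lemma lits_E {X} (l : list X) (M : model X) w : exists c, In c (lits l) /\ tr M w c.
Proof.
  induction l as [|a l IH]; simpl.
  - exists Top; split; [left; auto|apply tr_Top].
  - destruct IH as [c [Hc Ht]]. destruct (classic (V M a w)) as [Hv|Hv].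
    + exists (And (Var a) c). split; [apply in_flat_map; exists c; split; simpl; auto|simpl; auto].
    + exists (And (Neg (Var a)) c). split; [apply in_flat_map; exists c; split; simpl; auto|simpl; auto].
Qed.

Lemma lits_B {X} (l : list X) c : In c (lits l) ->
  forall (M : model X) w (M' : model X) w', tr M w c -> tr M' w' c ->
  forall p, In p l -> (V M p w <-> V M' p w').
Proof.
  revert c; induction l as [|a l IH]; simpl; intros c Hc M w M' w' H1 H2 p Hp.
  - destruct Hp.
  - apply in_flat_map in Hc. destruct Hc as [c' [Hc' Hin]].
    destruct Hin as [<-|[<-|[]]]; simpl in H1, H2; destruct H1 as [A1 B1], H2 as [A2 B2];
      destruct Hp as [<-|Hp]; first [solve [eapply IH; eauto] | tauto].
Qed.

Fixpoint chars {X} (l : list X) (k : nat) : list (form X) :=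
  match k with
  | 0 => lits l
  | S k' => flat_map (fun c0 => map (fun S => And c0 (And (bigand (map Dia S)) (Box (bigor S))))
                                    (powerlist (chars l k'))) (lits l)
  end.

Lemma chars_cl {X} (l : list X) k c : In c (chars l k) -> cl c.
Proof.
  revert c; induction k as [|k IH]; simpl; intros c Hc.
  - eapply lits_cl; eauto.
  - apply in_flat_map in Hc. destruct Hc as [c0 [Hc0 Hin]].
    apply in_map_iff in Hin. destruct Hin as [S [<- HS]].
    split; [eapply lits_cl; eauto|split].
    + apply cl_bigand. intros c' Hc'. apply in_map_iff in Hc'. destruct Hc' as [d [<- Hd]].
      simpl; left. apply IH. eapply power_incl; eauto.
    + simpl. left. apply cl_bigor. intros d Hd. apply IH. eapply power_incl; eauto.
Qed.

Lemma chars_E {X} (l : list X) k (M : model X) w : exists c, In c (chars l k) /\ tr M w c.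
Proof.
  revert w; induction k as [|k IH]; simpl; intros w.
  - apply lits_E.
  - destruct (lits_E l M w) as [c0 [Hc0 Ht0]].
    destruct (power_classic (fun c => exists v, R M w v /\ tr M v c) (chars l k)) as [S [HS HQ]].
    exists (And c0 (And (bigand (map Dia S)) (Box (bigor S)))). split.
    + apply in_flat_map. exists c0; split; auto. apply in_map_iff. exists S; auto.
    + change (tr M w c0 /\ tr M w (bigand (map Dia S)) /\ tr M w (Box (bigor S))).
      split; [auto|split].
      * apply tr_bigand. intros x Hx. apply in_map_iff in Hx. destruct Hx as [c [<- Hc]].
        apply HQ in Hc. exact (proj2 Hc).
      * apply tr_Box. intros v Hr. apply tr_bigor.
        destruct (IH v) as [c [Hc Ht]]. exists c; split; auto. apply HQ. eauto.
Qed.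

Lemma chars_B {X} (l : list X) (Hl : forall x, In x l) k c : In c (chars l k) ->
  forall (M : model X) w (M' : model X) w', tr M w c -> tr M' w' c -> wbisim k M M' w w'.
Proof.
  revert c; induction k as [|k IH]; simpl; intros c Hc M w M' w' H1 H2.
  - split; [|exact I]. intro p. eapply lits_B; eauto.
  - apply in_flat_map in Hc. destruct Hc as [c0 [Hc0 Hin]].
    apply in_map_iff in Hin. destruct Hin as [S [<- HS]].
    destruct H1 as [A1 [D1 B1]]. destruct H2 as [A2 [D2 B2]].
    rewrite tr_bigand in D1, D2. rewrite tr_Box in B1, B2.
    split; [intro p; eapply lits_B; eauto|split].
    + intros v Hr. apply B1, tr_bigor in Hr. destruct Hr as [d [Hd Ht]].
      destruct (D2 (Dia d) (in_map _ _ _ Hd)) as [v' [Hr' Ht']].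
      exists v'; split; auto. eapply IH; eauto. eapply power_incl; eauto.
    + intros v' Hr. apply B2, tr_bigor in Hr. destruct Hr as [d [Hd Ht]].
      destruct (D1 (Dia d) (in_map _ _ _ Hd)) as [v [Hr' Ht']].
      exists v; split; auto. eapply IH; eauto. eapply power_incl; eauto.
Qed.

Lemma wbisim_atoms {X} k (M M' : model X) w w' :
  wbisim k M M' w w' -> forall p, V M p w <-> V M' p w'.
Proof. destruct k; simpl; intros [H _]; exact H. Qed.

Fixpoint depth {X} (phi : form X) : nat :=
  match phi with
  | Var _ => 0 | NE => 0 | Neg a => depth a
  | And a b => max (depth a) (depth b)
  | Or a b => max (depth a) (depth b)
  | GOr a b => max (depth a) (depth b)
  | Dia a => S (depth a)
  end.

Lemma split_bisim {X} k (M : model X) s (M' : model X) s' t u :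
  sbisim k M s M' s' -> is_union s t u ->
  exists t' u', is_union s' t' u' /\ sbisim k M t M' t' /\ sbisim k M u M' u'.
Proof.
  intros [Hf Hb] Hun.
  exists (fun w' => s' w' /\ exists w, t w /\ wbisim k M M' w w'),
         (fun w' => s' w' /\ exists w, u w /\ wbisim k M M' w w').
  split; [|split; split].
  - intro w'; split.
    + intro Hw'. destruct (Hb w' Hw') as [w [Hw Hbi]].
      destruct (proj1 (Hun w) Hw); [left|right]; split; eauto.
    + intros [[? _]|[? _]]; auto.
  - intros w Hw. destruct (Hf w (proj2 (Hun w) (or_introl Hw))) as [w' [Hw' Hbi]].
    exists w'; split; eauto.
  - intros w' [_ [w [Hw Hbi]]]; eauto.
  - intros w Hw. destruct (Hf w (proj2 (Hun w) (or_intror Hw))) as [w' [Hw' Hbi]].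
    exists w'; split; eauto.
  - intros w' [_ [w [Hw Hbi]]]; eauto.
Qed.

Lemma inv {X} (phi : form X) : forall k (M : model X) s (M' : model X) s',
  depth phi <= k -> sbisim k M s M' s' ->
  (fst (sem M phi) s -> fst (sem M' phi) s') /\ (snd (sem M phi) s -> snd (sem M' phi) s').
Proof.
  induction phi as [p|a IHa|a IHa b IHb|a IHa b IHb|a IHa| |a IHa b IHb];
    simpl; intros k M s M' s' Hd Hsb.
  - destruct Hsb as [Hf Hb].
    split; intros H w' Hw'; destruct (Hb w' Hw') as [w [Hw Hbi]];
      pose proof (wbisim_atoms _ _ _ _ _ Hbi p) as Hp.
    + apply Hp; auto.
    + intro Hv; apply (H w Hw); apply Hp; auto.
  - destruct (IHa k M s M' s' Hd Hsb); split; auto.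
  - split.
    + intros [H1 H2]; split;
        [exact (proj1 (IHa k M s M' s' ltac:(lia) Hsb) H1)|exact (proj1 (IHb k M s M' s' ltac:(lia) Hsb) H2)].
    + intros (t & u & Hun & Ht & Hu).
      destruct (split_bisim _ _ _ _ _ _ _ Hsb Hun) as (t' & u' & Hun' & Ht' & Hu').
      exists t', u'; split; [auto|split;
        [exact (proj2 (IHa k M t M' t' ltac:(lia) Ht') Ht)|exact (proj2 (IHb k M u M' u' ltac:(lia) Hu') Hu)]].
  - split.
    + intros (t & u & Hun & Ht & Hu).
      destruct (split_bisim _ _ _ _ _ _ _ Hsb Hun) as (t' & u' & Hun' & Ht' & Hu').
      exists t', u'; split; [auto|split;
        [exact (proj1 (IHa k M t M' t' ltac:(lia) Ht') Ht)|exact (proj1 (IHb k M u M' u' ltac:(lia) Hu') Hu)]].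
    + intros [H1 H2]; split;
        [exact (proj2 (IHa k M s M' s' ltac:(lia) Hsb) H1)|exact (proj2 (IHb k M s M' s' ltac:(lia) Hsb) H2)].
  - destruct k as [|k]; [lia|]. assert (Hd' : depth a <= k) by lia.
    destruct Hsb as [Hf Hb]. split.
    + intros H w' Hw'. destruct (Hb w' Hw') as [w [Hw Hbi]].
      destruct Hbi as [Hat [Hfo Hba]].
      destruct (H w Hw) as (t & Ht & [v Hv] & Hs).
      exists (fun v' => R M' w' v' /\ exists v, t v /\ wbisim k M M' v v').
      split; [intros v' [? _]; auto|split].
      * destruct (Hfo v (Ht v Hv)) as [v' [Hr' Hb']]. exists v'; split; eauto.
      * refine (proj1 (IHa k M t M' _ Hd' _) Hs). split.
        -- intros x Hx. destruct (Hfo x (Ht x Hx)) as [x' [Hr' Hb']].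
           exists x'; split; eauto.
        -- intros x' [_ [x [Hx Hb']]]; eauto.
    + intros H w' Hw'. destruct (Hb w' Hw') as [w [Hw Hbi]].
      destruct Hbi as [Hat [Hfo Hba]].
      refine (proj2 (IHa k M (R M w) M' (R M' w') Hd' _) (H w Hw)). split; auto.
  - destruct Hsb as [Hf Hb]. split.
    + intros [w Hw]. destruct (Hf w Hw) as [w' [Hw' _]]; eauto.
    + intros H w' Hw'. destruct (Hb w' Hw') as [w [Hw _]]. exact (H w Hw).
  - split.
    + intros [H|H];
        [left; exact (proj1 (IHa k M s M' s' ltac:(lia) Hsb) H)|right; exact (proj1 (IHb k M s M' s' ltac:(lia) Hsb) H)].
    + intros [H1 H2]; split;
        [exact (proj2 (IHa k M s M' s' ltac:(lia) Hsb) H1)|exact (proj2 (IHb k M s M' s' ltac:(lia) Hsb) H2)].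
Qed.

Definition theta {X} (S : list (form X)) : form X :=
  fold_right (fun c acc => Or (And c NE) acc) (Neg NE) S.

Lemma theta_sem {X} (S : list (form X)) : (forall c, In c S -> cl c) ->
  forall (M : model X) (s : state M), fst (sem M (theta S)) s <->
  (forall w, s w -> exists c, In c S /\ tr M w c) /\
  (forall c, In c S -> exists w, s w /\ tr M w c).
Proof.
  induction S as [|a S IHS]; intros Hcl M s.
  - simpl. split.
    + intros H; split; [intros w Hw; exfalso; exact (H w Hw)|intros c []].
    + intros [H _] w Hw. destruct (H w Hw) as [c [[] _]].
  - assert (Ha : cl a) by (apply Hcl; left; auto).
    assert (HS : forall c, In c S -> cl c) by (intros; apply Hcl; right; auto).
    change ((exists t u, is_union s t u /\ (fst (sem M a) t /\ exists w, t w) /\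
             fst (sem M (theta S)) u) <->
      (forall w, s w -> exists c, In c (a :: S) /\ tr M w c) /\
      (forall c, In c (a :: S) -> exists w, s w /\ tr M w c)).
    split.
    + intros (t & u & Hun & [Ht [w0 Hw0]] & Hu). apply (IHS HS) in Hu.
      destruct Hu as [Hu1 Hu2]. split.
      * intros w Hw. destruct (proj1 (Hun w) Hw) as [H|H].
        -- exists a; split; [left; auto|]. exact (proj1 (proj1 (flat a Ha M t)) Ht w H).
        -- destruct (Hu1 w H) as [c [Hc Htr]]; exists c; split; [right|]; auto.
      * intros c [<-|Hc].
        -- exists w0; split; [apply Hun; left; auto|].
           exact (proj1 (proj1 (flat a Ha M t)) Ht w0 Hw0).
        -- destruct (Hu2 c Hc) as [w [Hw Htr]]; exists w; split; [apply Hun; right|]; auto.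
    + intros [H1 H2].
      exists (fun w => s w /\ tr M w a), (fun w => s w /\ exists c, In c S /\ tr M w c).
      split; [|split; [split|]].
      * intro w; split.
        -- intro Hw. destruct (H1 w Hw) as [c [[<-|Hc] Htr]]; [left|right]; split; eauto.
        -- intros [[? _]|[? _]]; auto.
      * apply flat; auto. intros w [_ ?]; auto.
      * destruct (H2 a (or_introl eq_refl)) as [w [Hw Ht]]; exists w; auto.
      * apply (IHS HS). split.
        -- intros w [Hw [c [Hc Ht]]]; eauto.
        -- intros c Hc. destruct (H2 c (or_intror Hc)) as [w [Hw Ht]].
           exists w; split; [split; [|exists c]|]; auto.
Qed.

Lemma bigGOr {X A} (g : A -> form X) (Q : A -> Prop) (l : list A) :
  exists phi, forall (M : model X) s, fst (sem M phi) s <-> exists a, In a l /\ Q a /\ fst (sem M (g a)) s.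
Proof.
  induction l as [|a l [phi Hphi]].
  - exists (And NE (Neg NE)). intros M s; simpl. split.
    + intros [[w Hw] H]; destruct (H w Hw).
    + intros [a [[] _]].
  - destruct (classic (Q a)) as [Qa|Qa].
    + exists (GOr (g a) phi). intros M s. simpl. rewrite Hphi. split.
      * intros [H|[b [Hb [Qb H]]]]; [exists a|exists b]; auto.
      * intros [b [[<-|Hb] [Qb H]]]; [left; auto|right; eauto].
    + exists phi. intros M s. rewrite Hphi. split.
      * intros [b [Hb [Qb H]]]; exists b; simpl; auto.
      * intros [b [[<-|Hb] [Qb H]]]; [contradiction|eauto].
Qed.

Theorem theorem3p15 (X : Type) (HX : finite_type X) (P : state_property X) :
  (exists phi : form X, forall (M : model X) (s : state M), P M s <-> extension phi M s) <->
  (exists k : nat, invariant_k k P).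
Proof.
  split.
  - intros [phi Hphi]. exists (depth phi). intros M s M' s' HP Hb.
    apply Hphi. apply Hphi in HP.
    exact (proj1 (inv phi (depth phi) M s M' s' (le_n _) Hb) HP).
  - destruct HX as [l Hl]. intros [k Hinv].
    destruct (bigGOr theta (fun S => exists (M0 : model X) s0, P M0 s0 /\ supports M0 s0 (theta S))
                     (powerlist (chars l k))) as [phi Hphi].
    exists phi. intros M s. unfold extension, supports. rewrite Hphi. split.
    + intros HP.
      destruct (power_classic (fun c => exists w, s w /\ tr M w c) (chars l k)) as [S [HS HQ]].
      assert (HclS : forall c, In c S -> cl c).
      { intros c Hc. apply (chars_cl l k). eapply power_incl; eauto. }
      assert (Hth : fst (sem M (theta S)) s).
      { apply theta_sem; auto. split.
        - intros w Hw. destruct (chars_E l k M w) as [c [Hc Ht]].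
          exists c; split; auto. apply HQ; eauto.
        - intros c Hc. apply HQ in Hc. exact (proj2 Hc). }
      exists S; split; auto; split; auto. exists M, s; split; auto.
    + intros [S [HS [[M0 [s0 [HP0 H0]]] Hs]]].
      assert (HclS : forall c, In c S -> cl c).
      { intros c Hc. apply (chars_cl l k). eapply power_incl; eauto. }
      apply (Hinv M0 s0 M s HP0).
      unfold supports in H0.
      apply (theta_sem S HclS) in H0. apply (theta_sem S HclS) in Hs.
      destruct H0 as [A0 B0], Hs as [A1 B1]. split.
      * intros w Hw. destruct (A0 w Hw) as [c [Hc Ht]].
        destruct (B1 c Hc) as [w' [Hw' Ht']]. exists w'; split; auto.
        eapply chars_B; eauto. eapply power_incl; eauto.
      * intros w' Hw'. destruct (A1 w' Hw') as [c [Hc Ht]].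
        destruct (B0 c Hc) as [w [Hw Ht']]. exists w; split; auto.
        eapply chars_B; eauto. eapply power_incl; eauto.
Qed.
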